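(* Consider the networked feedback system described in the context, under the input assumption stated there, and let $d_i(k)=\omega(k,k-i)u(k-i)$ for $i\in\mathcal D$. Then for all integers $k_1,k_2\ge 0$: (1) for $i\in\mathcal D$, $\mathbb E\{d_i(k_1)d_i(k_2)\}=\delta(k_1-k_2)\,\alpha_i^2p_i(1-p_i)\,\mathbb E\{u^2(k_1-i)\}$; (2) for $i_1\ne i_2$ in $\mathcal D$, $\mathbb E\{d_{i_1}(k_1)d_{i_2}(k_2)\}=-\delta(k_1-i_1-k_2+i_2)\,\alpha_{i_1}\alpha_{i_2}p_{i_1}p_{i_2}\,\mathbb E\{u^2(k_1-i_1)\}$.
   Context: Setting: $P$ is a SISO discrete-time LTI plant which is strictly proper (relative degree $\ge1$), $K$ a proper SISO LTI controller. Let $\tau\ge0$ be an integer, $\mathcal D=\{0,\dots,\tau\}$, and $\{\tau_n\}$ an i.i.d. sequence with values in $\mathcal D$, $\Pr\{\tau_n=i\}=p_i$, $\sum_ip_i=1$. With real weights $\alpha_0,\dots,\alpha_\tau$ and Kronecker delta $\delta$, the channel maps $u$ to $u_d(k)=\sum_{i=0}^{\tau}\alpha_i\delta(\tau_{k-i}-i)u(k-i)$. Closed loop: plant input $v-u_d$, plant output $y$, $u=Ky$; signals real, system at rest at $k=0$ (signals vanish for $k<0$). Define $\omega(k,n)=\alpha_{k-n}[\delta(\tau_n-(k-n))-p_{k-n}]$ if $n\le k\le n+\tau$ and $\omega(k,n)=0$ otherwise. Input assumption: $\{\tau_n\}$ is independent of $\{v(k)\}$, and $\{v(k)\}$ is zero-mean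 white noise (independent values) with bounded variances. *)

(* Defs.v *)
From HB Require Import structures.
From mathcomp Require Import all_boot all_order all_algebra.
From mathcomp Require Import all_classical all_reals all_analysis.
Set Implicit Arguments. Unset Strict Implicit. Unset Printing Implicit Defensive.
Import Order.TTheory GRing.Theory Num.Theory.
Import numFieldNormedType.Exports.
Local Open Scope classical_set_scope.
Local Open Scope ring_scope.

Definition mutual_indep {d} {T : measurableType d} {R : realType}
  (P : probability T R) {J : eqType} {d'} {V : measurableType d'}
  (X : J -> T -> V) : Prop :=
  forall (F : seq J) (B : J -> set V), uniq F ->
    (forall j, measurable (B j)) ->
    P (\bigcap_(j in [set` F]) (X j @^-1` B j)) =
    (\prod_(j <- F) P (X j @^-1` B j))%E.

Definition indep_processes {d} {T : measurableType d} {R : realType}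
  (P : probability T R) {I J : eqType} {d1 d2} {V : measurableType d1}
  {W : measurableType d2} (X : I -> T -> V) (Y : J -> T -> W) : Prop :=
  forall (F : seq I) (G : seq J) (B : I -> set V) (C : J -> set W),
    (forall i, measurable (B i)) -> (forall j, measurable (C j)) ->
    P ((\bigcap_(i in [set` F]) (X i @^-1` B i)) `&`
       (\bigcap_(j in [set` G]) (Y j @^-1` C j))) =
    (P (\bigcap_(i in [set` F]) (X i @^-1` B i)) *
     P (\bigcap_(j in [set` G]) (Y j @^-1` C j)))%E.

Definition closed_loop {R : realType} {np nk : nat}
  (Ap : 'M[R]_np) (Bp : 'cV[R]_np) (Cp : 'rV[R]_np)
  (Ak : 'M[R]_nk) (Bk : 'cV[R]_nk) (Ck : 'rV[R]_nk) (Dk : R)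
  (alpha : nat -> R) (tau : nat) (taus : nat -> nat) (v : nat -> R)
  (xp : nat -> 'cV[R]_np) (xk : nat -> 'cV[R]_nk) (y u ud : nat -> R) : Prop :=
  xp 0%N = 0 /\ xk 0%N = 0 /\
      (forall k, ud k = \sum_(i < tau.+1)
          (if (i <= k)%N then alpha i * (taus (k - i)%N == i)%:R * u (k - i)%N
           else 0)) /\
      (forall k, xp k.+1 = Ap *m xp k + (v k - ud k) *: Bp) /\
      (forall k, y k = (Cp *m xp k) 0 0) /\
      (forall k, xk k.+1 = Ak *m xk k + y k *: Bk) /\
      (forall k, u k = (Ck *m xk k) 0 0 + Dk * y k).

Definition omega {R : realType} (alpha p : nat -> R) (tau : nat)
  (taus : nat -> nat) (k n : nat) : R :=
  if (n <= k <= n + tau)%N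
  then alpha (k - n)%N * ((taus n == (k - n)%N)%:R - p (k - n)%N)
  else 0.

Definition ushift {R : realType} (u : nat -> R) (i k : nat) : R :=
  if (i <= k)%N then u (k - i)%N else 0.

Definition dnoise {R : realType} (alpha p : nat -> R) (tau : nat)
  (taus : nat -> nat) (u : nat -> R) (i k : nat) : R :=
  if (i <= k)%N then omega alpha p tau taus k (k - i)%N * u (k - i)%N else 0.

(* Main.v *)
Require Import Defs.
From HB Require Import structures.
From mathcomp Require Import all_boot all_order all_algebra.
From mathcomp Require Import all_classical all_reals all_analysis.
From mathcomp Require Import measurable_realfun.
From mathcomp Require Import ring lra zify.
Import Order.TTheory GRing.Theory Num.Theory.
Import numFieldNormedType.Exports.
Import HBNNSimple.
Local Open Scope classical_set_scope.
Local Open Scope ring_scope.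

Section core.
Context d (T : measurableType d) (R : realType) (P : probability T R).
Variables (taus : nat -> T -> nat) (v : nat -> T -> R).
Hypothesis mtaus : forall n, measurable_fun setT (taus n).
Hypothesis mv : forall k, measurable_fun setT (v k).
Hypothesis Itau : mutual_indep P taus.
Hypothesis Ipv : indep_processes P taus v.

Definition cylT m (B : nat -> set nat) : set T :=
  \bigcap_(n in [set` iota 0 m]) (taus n @^-1` B n).
Definition cylV (F : seq nat) (C : nat -> set R) : set T :=
  \bigcap_(j in [set` F]) (v j @^-1` C j).

Lemma cylT_meas m B : measurable (cylT m B).
Proof.
apply: bigcap_measurableType => n _.
by rewrite -(setTI (_ @^-1` _)); apply: (mtaus n).
Qed.

Lemma cylV_meas F C : (forall j, measurable (C j)) -> measurable (cylV F C).
Proof.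
move=> mC; apply: bigcap_measurableType => n _.
by rewrite -(setTI (_ @^-1` _)); apply: (mv n).
Qed.

Lemma P_cylT m B : P (cylT m B) = (\prod_(n <- iota 0 m) P (taus n @^-1` B n))%E.
Proof. by apply: Itau => //; exact: iota_uniq. Qed.

Lemma in_iota0 m n : [set` iota 0 m] n <-> (n < m)%N.
Proof. by rewrite /= mem_iota add0n. Qed.

Lemma cylT_S m B i : cylT m B `&` taus m @^-1` [set i] =
  cylT m.+1 (fun n => if (n < m)%N then B n else [set i]).
Proof.
apply/seteqP; split => t.
- move=> [Ht Hi] n /in_iota0 Hn /=.
  case: ifPn => nm; first by apply: Ht; apply/in_iota0.
  by have -> : n = m by apply/eqP; rewrite eqn_leq -ltnS Hn leqNgt.
- move=> H; split.
  + move=> n /in_iota0 Hn.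
    have := H n; rewrite Hn; apply; apply/in_iota0; exact: ltn_trans Hn _.
  + by have := H m; rewrite ltnn; apply; apply/in_iota0.
Qed.

Lemma P_cylT_S m B i : P (cylT m B `&` taus m @^-1` [set i]) =
  (P (cylT m B) * P (taus m @^-1` [set i]))%E.
Proof.
rewrite cylT_S !P_cylT -addn1 iotaD big_cat /= big_seq1 add0n ltnn.
congr (_ * _)%E; rewrite big_seq [RHS]big_seq; apply: eq_bigr => n.
by rewrite mem_iota add0n => /andP[_ ->].
Qed.


Definition Gs m : set (set T) := [set E | exists B F C,
  (forall j, measurable (C j)) /\ E = cylT m B `&` cylV F C].

Lemma Gs_meas m : Gs m `<=` measurable.
Proof.
move=> _ [B [F [C [mC ->]]]]; apply: measurableI;
  [exact: cylT_meas|exact: cylV_meas].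
Qed.

Lemma Gs_T m : Gs m setT.
Proof.
exists (fun _ => setT), [::], (fun _ => setT); split => //.
by apply/seteqP; split => // t _; split => n _.
Qed.

Lemma Gs_setI m : setI_closed (Gs m).
Proof.
move=> _ _ [B1 [F1 [C1 [mC1 ->]]]] [B2 [F2 [C2 [mC2 ->]]]].
exists (fun n => B1 n `&` B2 n), (F1 ++ F2),
  (fun j => (if j \in F1 then C1 j else setT) `&`
            (if j \in F2 then C2 j else setT)).
split.
  by move=> j; apply: measurableI; case: ifP => _.
apply/seteqP; split => t.
- move=> [[H1 V1] [H2 V2]]; split.
  + by move=> n Hn; split; [exact: H1|exact: H2].
  + move=> j /= _; split.
    * by case: ifPn => jF //; exact: V1.
    * by case: ifPn => jF //; exact: V2.
- move=> [H V]; split; split.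
  + by move=> n Hn; have [] := H n Hn.
  + move=> j /= jF; have := V j; rewrite /= mem_cat jF => /(_ isT) [+ _].
    by [].
  + by move=> n Hn; have [] := H n Hn.
  + move=> j /= jF; have := V j; rewrite /= mem_cat jF orbT => /(_ isT) [_].
    by [].
Qed.

Section indepD.
Variables (m i : nat) (pi : R).
Hypothesis pi0 : 0 <= pi.
Hypothesis Ppi : P (taus m @^-1` [set i]) = pi%:E.

Lemma mDm : measurable (taus m @^-1` [set i]).
Proof. by rewrite -(setTI (_ @^-1` _)); apply: (mtaus m). Qed.

Lemma indep_D E : <<s Gs m >> E ->
  P (E `&` taus m @^-1` [set i]) = (pi%:E * P E)%E.
Proof.
move=> sE.
suff : mrestr P mDm E = mscale (NngNum pi0) P E by [].
apply: (g_sigma_algebra_measure_unique (Gs m) (@Gs_meas m) (fun _ => setT)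
  (fun _ => Gs_T m)) => //.
- by apply/seteqP; split => // t _; exists 0%N.
- exact: Gs_setI.
- move=> _ [B [F [C [mC ->]]]]; change (P ((cylT m B `&` cylV F C) `&` taus m @^-1` [set i]) =
    (pi%:E * P (cylT m B `&` cylV F C))%E).
  rewrite setIAC cylT_S.
  rewrite (Ipv (iota 0 m.+1) F _ C) // (Ipv (iota 0 m) F B C) //.
  rewrite -/(cylT m.+1 _) -cylT_S P_cylT_S Ppi.
  by rewrite muleAC muleC.
- move=> _; change (P (setT `&` taus m @^-1` [set i]) < +oo)%E.
  by rewrite setTI (le_lt_trans (probability_le1 _ mDm)) // ltry.
Qed.

End indepD.

Section master.
Variables (m i : nat) (pi : R).
Hypothesis pi0 : 0 <= pi.
Hypothesis Ppi : P (taus m @^-1` [set i]) = pi%:E.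
Local Notation T' := (g_sigma_algebraType (Gs m)).

Lemma sGs_meas : <<s Gs m >> `<=` measurable.
Proof.
apply: smallest_sub; first exact: sigma_algebra_measurable.
exact: Gs_meas.
Qed.

Lemma measT'T (f : T -> R) : measurable_fun (setT : set T') f ->
  measurable_fun (setT : set T) f.
Proof.
move=> mf _ B mB; have := mf measurableT B mB; rewrite !setTI => H.
exact: sGs_meas.
Qed.

Lemma master_ge0 (Y : T -> R) : (forall t, 0 <= Y t) ->
  measurable_fun (setT : set T') Y ->
  (\int[P]_t ((taus m t == i)%:R * Y t)%:E = pi%:E * \int[P]_t (Y t)%:E)%E.
Proof.
move=> Y0 mY.
have mYT := @measT'T Y mY.
have mEY : measurable_fun (T := T') (U := \bar R) setT (EFin \o Y)
  by exact/measurable_EFinP.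
pose f_ := nnsfun_approx (measurableT : measurable (setT : set T')) mEY.
have mDm' := mDm m i.
have -> : (\int[P]_t ((taus m t == i)%:R * Y t)%:E =
    \int[P]_(t in taus m @^-1` [set i]) (Y t)%:E)%E.
  rewrite [RHS]integral_mkcond; apply: eq_integral => t _; rewrite patchE.
  case: (eqVneq (taus m t) i) => H.
    by rewrite mem_set // mul1r.
  by rewrite memNset ?mul0r // => /= H'; rewrite H' eqxx in H.
pose g n : T -> R := HBNNSimple.NonNegSimpleFun.sort (f_ n).
have mfT n : measurable_fun (setT : set T) (g n).
  by apply: measT'T; rewrite /g; exact: measurable_funPT.
have mA n r : measurable (g n @^-1` [set r]).
  apply: sGs_meas.
  by have := @measurable_sfunP _ _ T' R (f_ n) [set r] (measurable_set1 r).
have key n : (\int[P]_(t in taus m @^-1` [set i]) (g n t)%:E =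
    pi%:E * \int[P]_t (g n t)%:E)%E.
  rewrite /g; under eq_integral do rewrite fimfunE -fsumEFin//.
  under [X in (_ = _ * X)%E]eq_integral do rewrite fimfunE -fsumEFin//.
  rewrite ge0_integral_fsum//; last 2 first.
  - move=> r; apply/measurable_EFinP; apply: measurable_funM => //.
    by apply: measurable_indic; exact: (mA n r).
  - move=> r x _; rewrite lee_fin; have [r0|r0] := leP 0 r.
      by apply: mulr_ge0 => //; rewrite indicE.
    by rewrite preimage_nnfun0 // indic0 mulr0.
  rewrite ge0_integral_fsum//; last 2 first.
  - move=> r; apply/measurable_EFinP; apply: measurable_funM => //.
    by apply: measurable_indic; exact: (mA n r).
  - move=> r x _; rewrite lee_fin; have [r0|r0] := leP 0 r.
      by apply: mulr_ge0 => //; rewrite indicE.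
    by rewrite preimage_nnfun0 // indic0 mulr0.
  rewrite ge0_mule_fsumr; last first.
    move=> r; apply: integral_ge0 => x _; rewrite lee_fin; have [r0|r0] := leP 0 r.
      by apply: mulr_ge0 => //; rewrite indicE.
    by rewrite preimage_nnfun0 // indic0 mulr0.
  apply: eq_fsbigr => r _.
  rewrite (integralZl_indic mDm' (fun r => g n @^-1` [set r])) //;
    last by move=> r0 /=; rewrite /g; exact (preimage_nnfun0 (f_ n) r0).
  rewrite (integralZl_indic measurableT (fun r => g n @^-1` [set r])) //;
    last by move=> r0 /=; rewrite /g; exact (preimage_nnfun0 (f_ n) r0).
  rewrite !integral_indic // setIT [RHS]muleCA; congr (_ * _)%E.
  apply: (@indep_D m i pi pi0 Ppi).
  by have := @measurable_sfunP _ _ T' R (f_ n) [set r] (measurable_set1 r).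
have cvgY t : (fun n => (g n t)%:E) @ \oo --> (Y t)%:E.
  rewrite /g.
  exact: (@cvg_nnsfun_approx _ _ R setT measurableT _ mEY
    (fun t _ => (ltac:(rewrite /= lee_fin; exact: Y0) : (0 <= (Y t)%:E)%E)) t I).
have ndg t : {homo (fun n => (g n t)%:E) : a b / (a <= b)%N >-> (a <= b)%E}.
  by move=> a b ab; rewrite lee_fin /g; move/lefP : (nd_nnsfun_approx measurableT mEY ab); apply.
have mgE n : measurable_fun setT (fun t => (g n t)%:E) by apply/measurable_EFinP.
have g0 n t : (0 <= (g n t)%:E)%E by rewrite lee_fin /g; exact: fun_ge0.
have MC D (mD : measurable D) : (\int[P]_(t in D) (Y t)%:E =
    limn (fun n => \int[P]_(t in D) (g n t)%:E))%E.
  rewrite -monotone_convergence //.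
  - apply: eq_integral => t _; apply/esym/cvg_lim => //; exact: cvgY.
  - by move=> n; exact: measurable_funTS.
rewrite (MC _ mDm') (MC _ measurableT).
rewrite -limeMl //.
  by congr (limn _); apply/funext => n; rewrite key.
apply: ereal_nondecreasing_is_cvgn => a b ab; apply: ge0_le_integral => //.
by move=> t _; exact: ndg.
Qed.


Lemma mind : measurable_fun (setT : set T) (fun t => ((taus m t == i)%:R : R)).
Proof.
rewrite (_ : (fun t => _) = \1_(taus m @^-1` [set i])).
  exact: measurable_indic (mDm m i).
apply/funext => t; rewrite indicE; case: (eqVneq (taus m t) i) => H.
  by rewrite mem_set.
by rewrite memNset // => /= H'; rewrite H' eqxx in H.
Qed.

Lemma normM_ind (b : bool) (x : R) : `|(b%:R * x)| <= `|x|.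
Proof. by case: b; rewrite ?mul1r ?mul0r ?normr0. Qed.

Lemma master (Y : T -> R) : measurable_fun (setT : set T') Y ->
  P.-integrable setT (EFin \o Y) ->
  (\int[P]_t ((taus m t == i)%:R * Y t)%:E = pi%:E * \int[P]_t (Y t)%:E)%E.
Proof.
move=> mY iY.
pose Yp := fun t => Num.max (Y t) 0.
pose Yn := fun t => Num.max (- Y t) 0.
have mYp : measurable_fun (setT : set T') Yp by apply: measurable_maxr.
have mYn : measurable_fun (setT : set T') Yn.
  by apply: measurable_maxr => //; exact: measurable_funN.
have YE t : Y t = Yp t - Yn t.
  rewrite /Yp /Yn; case: (leP 0 (Y t)) => h.
    by rewrite (max_idPr _) ?subr0 // oppr_le0.
  have h2 : 0 <= - Y t by rewrite oppr_ge0 ltW.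
  by rewrite (max_idPl h2) sub0r opprK.
have Yp0 t : 0 <= Yp t by rewrite /Yp le_max lexx orbT.
have Yn0 t : 0 <= Yn t by rewrite /Yn le_max lexx orbT.
have Ypl t : `|Yp t| <= `|Y t|.
  rewrite ger0_norm // /Yp; case: (leP 0 (Y t)) => h.
    by rewrite ler_norm.
  by [].
have Ynl t : `|Yn t| <= `|Y t|.
  rewrite ger0_norm // /Yn; case: (leP 0 (Y t)) => h.
    by rewrite (max_idPr _) // oppr_le0.
  by rewrite (max_idPl _) ?ler_normr ?lexx ?orbT // oppr_ge0 ltW.
have mYT := @measT'T Y mY.
have mYpT := @measT'T Yp mYp.
have mYnT := @measT'T Yn mYn.
have intg (Z : T -> R) (b : T -> bool) : measurable_fun setT Z ->
    measurable_fun setT (fun t => ((b t)%:R : R)) ->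
    (forall t, `|Z t| <= `|Y t|) ->
    P.-integrable setT (fun t => ((b t)%:R * Z t)%:E).
  move=> mZ mb HZ; apply: (le_integrable measurableT _ _ iY).
    by apply/measurable_EFinP; exact: measurable_funM.
  by move=> t _ /=; rewrite lee_fin (le_trans (normM_ind _ _)).
have mtrue : measurable_fun (setT : set T) (fun t : T => (true%:R : R)).
  exact: measurable_cst.
have intY (Z : T -> R) : measurable_fun setT Z -> (forall t, `|Z t| <= `|Y t|) ->
    P.-integrable setT (fun t => (Z t)%:E).
  move=> mZ HZ; have := intg Z (fun _ => true) mZ mtrue HZ.
  by apply: eq_integrable => // t _; rewrite mul1r.
transitivity (\int[P]_t (((taus m t == i)%:R * Yp t)%:E -
                        ((taus m t == i)%:R * Yn t)%:E))%E.
  by apply: eq_integral => t _; rewrite YE mulrBr EFinB.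
rewrite integralB //; [|exact: intg mYpT mind Ypl|exact: intg mYnT mind Ynl].
rewrite !master_ge0 // -muleBr //; last first.
  by apply: fin_num_adde_defl; rewrite fin_numN; exact: integrable_fin_num (intY _ mYnT Ynl).
rewrite -integralB //; [|exact: intY mYpT Ypl|exact: intY mYnT Ynl].
by congr (_ * _)%E; apply: eq_integral => t _; rewrite YE EFinB.
Qed.

End master.

Lemma integrable_ind m i (Z : T -> R) : measurable_fun setT Z ->
  P.-integrable setT (EFin \o Z) ->
  P.-integrable setT (fun t => (((taus m t == i)%:R : R) * Z t)%:E).
Proof.
move=> mZ iZ; apply: (le_integrable measurableT _ _ iZ).
  by apply/measurable_EFinP; apply: measurable_funM => //; exact: mind.
by move=> t _ /=; rewrite lee_fin normM_ind.
Qed.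

Lemma lin3 m i1 i2 p1 p2 : 0 <= p1 -> 0 <= p2 ->
  P (taus m @^-1` [set i1]) = p1%:E -> P (taus m @^-1` [set i2]) = p2%:E ->
  forall (Z : T -> R), measurable_fun (setT : set (g_sigma_algebraType (Gs m))) Z ->
  P.-integrable setT (EFin \o Z) -> forall c0 c1 c2 : R,
  (\int[P]_t (((c0 + c1 * (taus m t == i1)%:R + c2 * (taus m t == i2)%:R)
      * Z t)%:E) = (c0 + c1 * p1 + c2 * p2)%:E * \int[P]_t (Z t)%:E)%E.
Proof.
move=> p10 p20 H1 H2 Z mZ iZ c0 c1 c2.
have mZT := @measT'T m Z mZ.
have i1Z := @integrable_ind m i1 Z mZT iZ.
have i2Z := @integrable_ind m i2 Z mZT iZ.
transitivity (\int[P]_t ((c0%:E * (Z t)%:E +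
    c1%:E * (((taus m t == i1)%:R : R) * Z t)%:E) +
    c2%:E * (((taus m t == i2)%:R : R) * Z t)%:E))%E.
  by apply: eq_integral => t _; rewrite -!EFinM -!EFinD; congr (_%:E); ring.
rewrite integralD //; last 2 first.
- by apply: integrableD => //; apply: integrableZl.
- exact: integrableZl.
rewrite integralD //; last 2 first.
- exact: integrableZl.
- exact: integrableZl.
rewrite !integralZl // (@master m i1 p1 p10 H1 Z mZ iZ) (@master m i2 p2 p20 H2 Z mZ iZ).
have := integrable_fin_num measurableT iZ.
move: (\int[P]_t _)%E => e; case: e => // e _.
by rewrite -!EFinM -!EFinD; congr (_%:E); ring.
Qed.

Section good.
Variable m : nat.
Local Notation T' := (g_sigma_algebraType (Gs m)).

Definition Good (f : T -> R) := measurable_fun (setT : set T') f /\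
  P.-integrable setT (fun t => (f t ^+ 2)%:E).

Lemma Good_ext f g : (forall t, f t = g t) -> Good f -> Good g.
Proof. by move=> fg; have -> : g = f by apply/funext => t; rewrite fg. Qed.

Lemma GoodT f : Good f -> measurable_fun (setT : set T) f.
Proof. by case=> mf _; exact: (@measT'T m f mf). Qed.

Lemma Good_cst c : Good (fun _ => c).
Proof.
split; first exact: measurable_cst.
apply/integrableP; split; first exact: measurable_cst.
by rewrite integral_cst // lte_mul_pinfty // (le_lt_trans (probability_le1 _ measurableT)) // ltry.
Qed.

Lemma Good_add f g : Good f -> Good g -> Good (fun t => f t + g t).
Proof.
move=> [mf if2] [mg ig2]; split; first exact: measurable_funD.
have mfT := @measT'T m f mf; have mgT := @measT'T m g mg.
apply: (le_integrable measurableT _ _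
  (integrableD measurableT (integrableZl measurableT 2 if2)
                           (integrableZl measurableT 2 ig2))).
  apply/measurable_EFinP; apply: measurable_funX.
  exact: measurable_funD.
move=> t _ /=; rewrite lee_fin.
rewrite !ger0_norm ?sqr_ge0 //; last by rewrite addr_ge0 // mulr_ge0 // sqr_ge0.
have := sqr_ge0 (f t - g t); rewrite !expr2; nra.
Qed.

Lemma Good_scale c f : Good f -> Good (fun t => c * f t).
Proof.
move=> [mf if2]; split; first exact: measurable_funM.
have := integrableZl measurableT (c ^+ 2) if2.
by apply: eq_integrable => // t _; rewrite -EFinM exprMn.
Qed.

Lemma Good_mulb (b : T -> bool) f :
  measurable_fun (setT : set T') (fun t => ((b t)%:R : R)) ->
  Good f -> Good (fun t => (b t)%:R * f t).
Proof.
move=> mb [mf if2]; split; first exact: measurable_funM.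
apply: (le_integrable measurableT _ _ if2).
  apply/measurable_EFinP; apply: measurable_funX.
  by apply: measurable_funM; [exact: (@measT'T m _ mb)|exact: (@measT'T m _ mf)].
move=> t _ /=; rewrite lee_fin.
by case: (b t); rewrite ?mul1r ?mul0r ?expr0n ?normr0.
Qed.

Lemma Good_sum (I : Type) (s : seq I) (F : I -> T -> R) :
  (forall j, Good (F j)) -> Good (fun t => \sum_(j <- s) F j t).
Proof.
move=> HF; elim: s => [|j s IH].
  apply: (@Good_ext (fun _ => 0)); last exact: Good_cst.
  by move=> t; rewrite big_nil.
apply: (@Good_ext (fun t => F j t + \sum_(j <- s) F j t)); last exact: Good_add.
by move=> t; rewrite big_cons.
Qed.

Lemma Good_v j : v j \in Lfun P 2%:E -> Good (v j).
Proof.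
move=> vL; split; last exact: Lfun2_integrable_sqr.
move=> _ B mB; apply: sub_sigma_algebra.
exists (fun _ => setT), [:: j], (fun _ => B); split => //.
apply/seteqP; split => t /=.
- move=> [_ vB]; split; first by move=> n _.
  by move=> k /=; rewrite inE => /eqP ->.
- move=> [_ H]; split => //; apply: H; exact: mem_head.
Qed.

Lemma meas_tau n (h : nat -> R) : (n < m)%N ->
  measurable_fun (setT : set T') (fun t => h (taus n t)).
Proof.
move=> nm _ B mB; apply: sub_sigma_algebra.
exists (fun k => if k == n then h @^-1` B else setT), [::], (fun _ => setT).
split => //; apply/seteqP; split => t /=.
- move=> [_ hB]; split; last by move=> k.
  by move=> k _; case: eqP => // ->.
- move=> [H _]; split => //; have := H n; rewrite eqxx; apply.
  exact/in_iota0.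
Qed.

Lemma Good_mul_int f g : Good f -> Good g ->
  P.-integrable setT (fun t => (f t * g t)%:E).
Proof.
move=> [mf if2] [mg ig2].
apply: (le_integrable measurableT _ _ (integrableD measurableT if2 ig2)).
  by apply/measurable_EFinP; apply: measurable_funM; [exact: (@measT'T m _ mf)|exact: (@measT'T m _ mg)].
move=> t _ /=; rewrite lee_fin.
rewrite [X in _ <= X]ger0_norm ?addr_ge0 ?sqr_ge0 //.
rewrite normrM; have := sqr_ge0 (`|f t| - `|g t|).
rewrite -[f t ^+ 2]real_normK ?num_real // -[g t ^+ 2]real_normK ?num_real //.
rewrite !expr2; nra.
Qed.

End good.

Section dyn.
Variables (np nk : nat) (Ap : 'M[R]_np) (Bp : 'cV[R]_np) (Cp : 'rV[R]_np)
  (Ak : 'M[R]_nk) (Bk : 'cV[R]_nk) (Ck : 'rV[R]_nk) (Dk : R)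
  (tau : nat) (alpha : nat -> R)
  (xp : nat -> T -> 'cV[R]_np) (xk : nat -> T -> 'cV[R]_nk)
  (y u ud : nat -> T -> R).
Hypothesis Hcl : forall t, closed_loop Ap Bp Cp Ak Bk Ck Dk alpha tau
  (fun n => taus n t) (fun k => v k t) (fun k => xp k t) (fun k => xk k t)
  (fun k => y k t) (fun k => u k t) (fun k => ud k t).
Hypothesis vL2 : forall k, v k \in Lfun P 2%:E.

Definition SG m k := (forall a, Good m (fun t => xp k t a 0)) /\
  (forall a, Good m (fun t => xk k t a 0)).

Lemma y_good {m k} : SG m k -> Good m (y k).
Proof.
move=> [Hp Hk].
apply: (@Good_ext m (fun t => \sum_(a < np) Cp 0 a * xp k t a 0)).
  move=> t; have := Hcl t; rewrite /closed_loop /=.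
  move=> -[xp0 [xk0 [udE [xpS [yE [xkS uE]]]]]].
  by rewrite yE !mxE.
by apply: Good_sum => a; apply: Good_scale; exact: Hp.
Qed.

Lemma u_good {m k} : SG m k -> Good m (u k).
Proof.
move=> H; have yg := y_good H; move: H => [Hp Hk].
apply: (@Good_ext m (fun t => \sum_(a < nk) Ck 0 a * xk k t a 0 + Dk * y k t)).
  move=> t; have := Hcl t; rewrite /closed_loop /=.
  move=> -[xp0 [xk0 [udE [xpS [yE [xkS uE]]]]]].
  by rewrite uE !mxE.
apply: Good_add; last exact: Good_scale.
by apply: Good_sum => a; apply: Good_scale; exact: Hk.
Qed.

Lemma ud_good {m k} : (k < m)%N -> (forall k', (k' <= k)%N -> Good m (u k')) ->
  Good m (ud k).
Proof.
move=> km ug.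
apply: (@Good_ext m (fun t => \sum_(i < tau.+1)
   (if (i <= k)%N then alpha i * ((taus (k - i)%N t == i)%:R * u (k - i)%N t)
    else 0))).
  move=> t; have := Hcl t; rewrite /closed_loop /=.
  move=> -[xp0 [xk0 [udE [xpS [yE [xkS uE]]]]]].
  by rewrite udE; apply: eq_bigr => i _; case: ifP => //; rewrite mulrA.
apply: Good_sum => i; have [ik|ik] := boolP (i <= k)%N; last first.
  exact: Good_cst.
apply: Good_scale; apply: Good_mulb.
  apply: (@meas_tau m (k - i)%N (fun x => ((x == i)%:R : R))).
  by rewrite (leq_ltn_trans (leq_subr _ _) km).
by apply: ug; exact: leq_subr.
Qed.

Lemma state_good m : forall k, (k <= m)%N -> forall k', (k' <= k)%N -> SG m k'.
Proof.
elim=> [_ k'|k IH km k'].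
  rewrite leqn0 => /eqP ->; split => a;
    apply: (@Good_ext m (fun _ => 0)); try exact: Good_cst;
    move=> t; have := Hcl t; rewrite /closed_loop /=;
    move=> -[xp0 [xk0 [udE [xpS [yE [xkS uE]]]]]].
    by rewrite xp0 mxE.
  by rewrite xk0 mxE.
rewrite leq_eqVlt => /orP[/eqP ->|]; last by rewrite ltnS; apply: IH; exact: ltnW.
have IHk := IH (ltnW km).
have ug kk : (kk <= k)%N -> Good m (u kk) by move=> ?; apply: u_good; exact: IHk.
have udg := ud_good km ug.
have [Hp Hk] := IHk k (leqnn k).
have yg := y_good (IHk k (leqnn k)).
have vg := @Good_v m k (vL2 k).
split => a.
- apply: (@Good_ext m (fun t => \sum_(b < np) Ap a b * xp k t b 0 +
      (Bp a 0 * v k t + (- Bp a 0) * ud k t))).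
    move=> t; have := Hcl t; rewrite /closed_loop /=.
    move=> -[xp0 [xk0 [udE [xpS [yE [xkS uE]]]]]].
    by rewrite xpS !mxE; congr (_ + _); ring.
  apply: Good_add; last by apply: Good_add; exact: Good_scale.
  by apply: Good_sum => b; apply: Good_scale; exact: Hp.
- apply: (@Good_ext m (fun t => \sum_(b < nk) Ak a b * xk k t b 0 +
      Bk a 0 * y k t)).
    move=> t; have := Hcl t; rewrite /closed_loop /=.
    move=> -[xp0 [xk0 [udE [xpS [yE [xkS uE]]]]]].
    by rewrite xkS !mxE; congr (_ + _); ring.
  apply: Good_add; last exact: Good_scale.
  by apply: Good_sum => b; apply: Good_scale; exact: Hk.
Qed.

Lemma u_good_le m k : (k <= m)%N -> Good m (u k).
Proof. by move=> km; apply: u_good; exact: (@state_good m k km k (leqnn k)). Qed.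

Variable p : nat -> R.
Hypothesis Pp : forall n i, (i <= tau)%N -> P (taus n @^-1` [set i]) = (p i)%:E.

Lemma p0 i : (i <= tau)%N -> 0 <= p i.
Proof.
by move=> it; rewrite -lee_fin -(@Pp 0 i it); exact: measure_ge0.
Qed.

Lemma dnE i k t : (i <= tau)%N ->
  dnoise alpha p tau (fun n => taus n t) (fun m => u m t) i k =
  if (i <= k)%N then alpha i * ((taus (k - i)%N t == i)%:R - p i) * u (k - i)%N t
  else 0.
Proof.
move=> it; rewrite /dnoise /omega; case: ifP => ik //.
rewrite subKn // leq_subr /= -{1}(subnK ik) leq_add2l it.
by [].
Qed.

Lemma bounded_int (h W : T -> R) (B : R) : measurable_fun setT h ->
  measurable_fun setT W -> (forall t, `|h t| <= B) ->
  P.-integrable setT (EFin \o W) -> P.-integrable setT (fun t => (h t * W t)%:E).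
Proof.
move=> mh mW hB iW.
apply: (le_integrable measurableT _ _ (integrableZl measurableT B iW)).
  by apply/measurable_EFinP; exact: measurable_funM.
move=> t _ /=; rewrite lee_fin normrM [X in _ <= X]normrM.
apply: ler_wpM2r => //; exact: (le_trans (hB t) (ler_norm _)).
Qed.

Lemma cross_zero m1 m2 i1 i2 (c : R) : (m1 < m2)%N -> (i1 <= tau)%N ->
  (i2 <= tau)%N ->
  (\int[P]_t ((c * ((taus m1 t == i1)%:R - p i1) * u m1 t) *
               (((taus m2 t == i2)%:R - p i2) * u m2 t))%:E = 0)%E.
Proof.
move=> m12 i1t i2t.
pose h := fun t => c * ((taus m1 t == i1)%:R - p i1).
pose Z := fun t => h t * (u m1 t * u m2 t).
have g1 := @u_good_le m2 m1 (ltnW m12).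
have g2 := @u_good_le m2 m2 (leqnn m2).
have mh : measurable_fun (setT : set (g_sigma_algebraType (Gs m2))) h.
  exact: (@meas_tau m2 m1 (fun x => c * ((x == i1)%:R - p i1))).
have mZ : measurable_fun (setT : set (g_sigma_algebraType (Gs m2))) Z.
  apply: measurable_funM => //; apply: measurable_funM; [exact: g1.1|exact: g2.1].
have iZ : P.-integrable setT (EFin \o Z).
  apply: (@bounded_int h _ (`|c| * (1 + `|p i1|))).
  - exact: (@measT'T m2 h mh).
  - by apply: measurable_funM; [exact: (@GoodT m2 _ g1)|exact: (@GoodT m2 _ g2)].
  - move=> t; rewrite /h normrM ler_wpM2l //.
    by rewrite (le_trans (ler_normB _ _)) // lerD2r; case: (_ == _); rewrite ?normr1 ?normr0.
  - exact: (@Good_mul_int m2 _ _ g1 g2).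
transitivity (\int[P]_t (((- p i2) + 1 * (taus m2 t == i2)%:R +
    0 * (taus m2 t == i2)%:R) * Z t)%:E)%E.
  by apply: eq_integral => t _; congr (_%:E); rewrite /Z /h; ring.
rewrite (@lin3 m2 i2 i2 (p i2) (p i2) (@p0 i2 i2t) (@p0 i2 i2t) (@Pp m2 i2 i2t)
  (@Pp m2 i2 i2t) Z mZ iZ).
by rewrite mul1r mul0r addr0 addrC subrr mul0e.
Qed.

Lemma same_m m i1 i2 (c0 c1 c2 : R) : (i1 <= tau)%N -> (i2 <= tau)%N ->
  (\int[P]_t (((c0 + c1 * (taus m t == i1)%:R + c2 * (taus m t == i2)%:R)
      * u m t ^+ 2)%:E) =
   (c0 + c1 * p i1 + c2 * p i2)%:E * \int[P]_t (u m t ^+ 2)%:E)%E.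
Proof.
move=> i1t i2t.
have g := @u_good_le m m (leqnn m).
have mZ : measurable_fun (setT : set (g_sigma_algebraType (Gs m))) (fun t => u m t ^+ 2).
  by apply: measurable_funX; exact: g.1.
have iZ : P.-integrable setT (EFin \o (fun t => u m t ^+ 2)).
  have := @Good_mul_int m _ _ g g.
  by apply: eq_integrable => // t _; rewrite /= expr2.
exact: (@lin3 m i1 i2 (p i1) (p i2) (@p0 i1 i1t) (@p0 i2 i2t) (@Pp m i1 i1t)
  (@Pp m i2 i2t) _ mZ iZ).
Qed.

Lemma part1 i k1 k2 : (i <= tau)%N ->
  ('E_P[fun t => (dnoise alpha p tau (fun n => taus n t) (fun m => u m t) i k1 *
                  dnoise alpha p tau (fun n => taus n t) (fun m => u m t) i k2)%R] =
   ((k1 == k2)%:R * alpha i ^+ 2 * p i * (1 - p i))%:E *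
   'E_P[fun t => (ushift (fun m => u m t) i k1 ^+ 2)%R])%E.
Proof.
move=> it; rewrite unlock.
under eq_integral => t _ do rewrite !(@dnE i _ t it).
have [ik1|ik1] := boolP (i <= k1)%N; last first.
  rewrite integral0_eq => [|t _]; last by rewrite mul0r.
  rewrite integral0_eq => [|t _]; last by rewrite /ushift (negbTE ik1) expr0n.
  by rewrite mule0.
have [ik2|ik2] := boolP (i <= k2)%N; last first.
  rewrite integral0_eq => [|t _]; last by rewrite mulr0.
  have -> : (k1 == k2) = false.
    by apply/negbTE; apply: contraNneq ik2 => <-.
  by rewrite !mul0r mul0e.
case: (ltngtP k1 k2) => h.
- have m12 : (k1 - i < k2 - i)%N by rewrite ltn_sub2r // (leq_ltn_trans ik1 h).
  rewrite (eq_integral (fun t => ((alpha i ^+ 2 * ((taus (k1 - i)%N t == i)%:R - p i)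
     * u (k1 - i)%N t) * (((taus (k2 - i)%N t == i)%:R - p i) * u (k2 - i)%N t))%:E));
    last by move=> t _; congr (_%:E); ring.
  by rewrite cross_zero // !mul0r mul0e.
- have m21 : (k2 - i < k1 - i)%N by rewrite ltn_sub2r // (leq_ltn_trans ik2 h).
  rewrite (eq_integral (fun t => ((alpha i ^+ 2 * ((taus (k2 - i)%N t == i)%:R - p i)
     * u (k2 - i)%N t) * (((taus (k1 - i)%N t == i)%:R - p i) * u (k1 - i)%N t))%:E));
    last by move=> t _; congr (_%:E); ring.
  by rewrite cross_zero // !mul0r mul0e.
- subst k2; rewrite mul1r /ushift ik1.
  rewrite (eq_integral (fun t => (((alpha i ^+ 2 * p i ^+ 2) +
     (alpha i ^+ 2 * (1 - 2 * p i)) * (taus (k1 - i)%N t == i)%:R +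
     0 * (taus (k1 - i)%N t == i)%:R) * u (k1 - i)%N t ^+ 2)%:E)); last first.
    by move=> t _; congr (_%:E); case: (_ == _); rewrite /=; ring.
  by rewrite same_m //; congr (_%:E * _)%E; ring.
Qed.

Lemma part2 i1 i2 k1 k2 : (i1 <= tau)%N -> (i2 <= tau)%N -> i1 != i2 ->
  ('E_P[fun t => (dnoise alpha p tau (fun n => taus n t) (fun m => u m t) i1 k1 *
                  dnoise alpha p tau (fun n => taus n t) (fun m => u m t) i2 k2)%R] =
   (- ((k1 + i2 == k2 + i1)%N%:R * alpha i1 * alpha i2 * p i1 * p i2))%:E *
   'E_P[fun t => (ushift (fun m => u m t) i1 k1 ^+ 2)%R])%E.
Proof.
move=> i1t i2t ne; rewrite unlock.
under eq_integral => t _ do rewrite (@dnE i1 _ t i1t) (@dnE i2 _ t i2t).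
have [ik1|ik1] := boolP (i1 <= k1)%N; last first.
  rewrite integral0_eq => [|t _]; last by rewrite mul0r.
  rewrite integral0_eq => [|t _]; last by rewrite /ushift (negbTE ik1) expr0n.
  by rewrite mule0.
have [ik2|ik2] := boolP (i2 <= k2)%N; last first.
  rewrite integral0_eq => [|t _]; last by rewrite mulr0.
  have -> : (k1 + i2 == k2 + i1)%N = false by apply/negbTE/eqP; lia.
  by rewrite !mul0r oppr0 mul0e.
case: (ltngtP (k1 - i1) (k2 - i2)) => h.
- rewrite (eq_integral (fun t => ((alpha i1 * alpha i2 *
     ((taus (k1 - i1)%N t == i1)%:R - p i1) * u (k1 - i1)%N t) *
     (((taus (k2 - i2)%N t == i2)%:R - p i2) * u (k2 - i2)%N t))%:E));
    last by move=> t _; congr (_%:E); ring.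
  have -> : (k1 + i2 == k2 + i1)%N = false by apply/negbTE/eqP; lia.
  by rewrite cross_zero // !mul0r oppr0 mul0e.
- rewrite (eq_integral (fun t => ((alpha i1 * alpha i2 *
     ((taus (k2 - i2)%N t == i2)%:R - p i2) * u (k2 - i2)%N t) *
     (((taus (k1 - i1)%N t == i1)%:R - p i1) * u (k1 - i1)%N t))%:E));
    last by move=> t _; congr (_%:E); ring.
  have -> : (k1 + i2 == k2 + i1)%N = false by apply/negbTE/eqP; lia.
  by rewrite cross_zero // !mul0r oppr0 mul0e.
- have -> : (k1 + i2 == k2 + i1)%N = true by apply/eqP; lia.
  rewrite mul1r /ushift ik1 -h.
  rewrite (eq_integral (fun t => (((alpha i1 * alpha i2 * p i1 * p i2) +
     (- (alpha i1 * alpha i2 * p i2)) * (taus (k1 - i1)%N t == i1)%:R +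
     (- (alpha i1 * alpha i2 * p i1)) * (taus (k1 - i1)%N t == i2)%:R)
     * u (k1 - i1)%N t ^+ 2)%:E)); last first.
    move=> t _; congr (_%:E).
    case: (eqVneq (taus (k1 - i1)%N t) i1) => [e1|n1].
      by rewrite e1 (negbTE ne) /=; ring.
    by case: (_ == _); rewrite /=; ring.
  by rewrite same_m //; congr (_%:E * _)%E; ring.
Qed.

End dyn.

End core.

Theorem lemma4 (d : measure_display) (T : measurableType d) (R : realType)
  (P : probability T R) (np nk : nat)
  (Ap : 'M[R]_np) (Bp : 'cV[R]_np) (Cp : 'rV[R]_np)
  (Ak : 'M[R]_nk) (Bk : 'cV[R]_nk) (Ck : 'rV[R]_nk) (Dk : R)
  (tau : nat) (alpha p : nat -> R)
  (taus : nat -> T -> nat) (v : nat -> T -> R)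
  (xp : nat -> T -> 'cV[R]_np) (xk : nat -> T -> 'cV[R]_nk)
  (y u ud : nat -> T -> R) :
  (* the delays take values in D = {0,..,tau}, i.i.d. with law p *)
  (forall n t, (taus n t <= tau)%N) ->
  (forall n, measurable_fun setT (taus n)) ->
  (forall n i, (i <= tau)%N -> P (taus n @^-1` [set i]) = (p i)%:E) ->
  \sum_(i < tau.+1) p i = 1 ->
  mutual_indep P taus ->
  (* v: zero-mean white noise (independent values) with bounded variances *)
  (forall k, measurable_fun setT (v k)) ->
  mutual_indep P v ->
  (forall k, ('E_P[v k] = 0)%E) ->
  (exists M : R, forall k, v k \in Lfun P 2%:E /\ ('V_P[v k] <= M%:E)%E) ->
  (* {tau_n} independent of {v(k)} *)
  indep_processes P taus v ->
  (* closed loop, at rest at k = 0 *)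
  (forall t, closed_loop Ap Bp Cp Ak Bk Ck Dk alpha tau
     (fun n => taus n t) (fun k => v k t) (fun k => xp k t) (fun k => xk k t)
     (fun k => y k t) (fun k => u k t) (fun k => ud k t)) ->
  let dn := fun i k t => dnoise alpha p tau (fun n => taus n t) (fun m => u m t) i k in
  (forall i k1 k2, (i <= tau)%N ->
     ('E_P[fun t => (dn i k1 t * dn i k2 t)%R] =
      ((k1 == k2)%:R * alpha i ^+ 2 * p i * (1 - p i))%:E *
      'E_P[fun t => (ushift (fun m => u m t) i k1 ^+ 2)%R])%E) /\
  (forall i1 i2 k1 k2, (i1 <= tau)%N -> (i2 <= tau)%N -> i1 != i2 ->
     ('E_P[fun t => (dn i1 k1 t * dn i2 k2 t)%R] =
      (- ((k1 + i2 == k2 + i1)%N%:R * alpha i1 * alpha i2 * p i1 * p i2))%:E *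
      'E_P[fun t => (ushift (fun m => u m t) i1 k1 ^+ 2)%R])%E).
Proof.
move=> tle mtaus Pp psum Itau mv Iv Ev [M HM] Ipv Hcl dn.
have vL2 k : v k \in Lfun P 2%:E by case: (HM k).
split.
- move=> i k1 k2 it.
  exact: (@part1 _ _ _ P taus v mtaus mv Itau Ipv _ _ _ _ _ _ _ _ _ _ _ _ _ _ _ _ Hcl vL2 p Pp i k1 k2 it).
- move=> i1 i2 k1 k2 i1t i2t ne.
  exact: (@part2 _ _ _ P taus v mtaus mv Itau Ipv _ _ _ _ _ _ _ _ _ _ _ _ _ _ _ _ Hcl vL2 p Pp i1 i2 k1 k2 i1t i2t ne).
Qed.
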